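(* Consider the Gaussian partial interference multiple access channel (PIMAC) with real channel coefficients $h_{12},h_{22},h_{31}$ and transmit power constraints $P_1,P_2,P_3>0$. Define the SD-TIN sum-rate $$R_\Sigma^{SD\text{-}TIN}=\frac{1}{2}\log\left(1+\frac{P_1+P_2}{1+h_{31}^2P_3}\right)+\frac{1}{2}\log\left(1+\frac{P_3}{1+h_{12}^2P_1+h_{22}^2P_2}\right)$$ and the TDMA-TIN sum-rate $R_\Sigma^{TDMA\text{-}TIN}=\max_{\alpha\in[0,1]}\big(A(\alpha)+B(\alpha)\big)$, where $$A(\alpha)=\frac{\alpha}{2}\log\left(1+\frac{P_1/\alpha}{1+h_{31}^2P_3}\right)+\frac{1-\alpha}{2}\log\left(1+\frac{P_2/(1-\alpha)}{1+h_{31}^2P_3}\right),$$ $$B(\alpha)=\frac{\alpha}{2}\log\left(1+\frac{P_3}{1+h_{12}^2P_1/\alpha}\right)+\frac{1-\alpha}{2}\log\left(1+\frac{P_3}{1+h_{22}^2P_2/(1-\alpha)}\right)$$ (with the terms at $\alpha=0$ and $\alpha=1$ understood as their limits). Then $R_\Sigma^{TDMA\text{-}TIN}\geq R_\Sigma^{SD\text{-}TIN}$; moreover, already the choice $\alpha=\alpha^*=\frac{P_1}{P_1+P_2}$ gives $A(\alpha^* )+B(\alpha^* )\ge R_\Sigma^{SD\text{-}TIN}$, and if $h_{12}^2\neq h_{22}^2$ then $A(\alpha^* )+B(\alpha^* )> R_\Sigma^{SD\text{-}TIN}$, so in particular $R_\Sigma^{TDMA\text{-}TIN}> R_\Sig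ma^{SD\text{-}TIN}$.
   Context: The PIMAC has received signals $Y_1=X_1+X_2+h_{31}X_3+Z_1$ and $Y_2=h_{12}X_1+h_{22}X_2+X_3+Z_2$, where $Z_1,Z_2\sim\mathcal{N}(0,1)$ are i.i.d. noise, receiver 1 wants the messages of transmitters 1 and 2, receiver 2 wants the message of transmitter 3, and transmitter $i$ has average power constraint $P_i$. $R_\Sigma^{SD\text{-}TIN}$ is the sum-rate achieved with Gaussian codes at full power, successive decoding at receiver 1 treating $X_3$ as noise, and receiver 2 treating $X_1,X_2$ as noise; $R_\Sigma^{TDMA\text{-}TIN}$ is the sum-rate when users 1 and 2 time-share (fractions $\alpha$, $1-\alpha$, with powers $P_1/\alpha$, $P_2/(1-\alpha)$) and all receivers treat interference as noise. Logarithms are base 2. *)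

(* Defs.v *)
From Stdlib Require Import Reals.
From Coquelicot Require Import Coquelicot.
Open Scope R_scope.

Definition log2 (x : R) : R := ln x / ln 2.

Definition R_SD_TIN (h12 h22 h31 P1 P2 P3 : R) : R :=
  / 2 * log2 (1 + (P1 + P2) / (1 + h31 ^ 2 * P3))
  + / 2 * log2 (1 + P3 / (1 + h12 ^ 2 * P1 + h22 ^ 2 * P2)).

(* A(alpha): the terms with weight alpha (resp. 1 - alpha) are set to their
   limit 0 when alpha = 0 (resp. alpha = 1). *)
Definition tdmaA (h12 h22 h31 P1 P2 P3 a : R) : R :=
  (if Req_EM_T a 0 then 0
   else a / 2 * log2 (1 + (P1 / a) / (1 + h31 ^ 2 * P3)))
  + (if Req_EM_T (1 - a) 0 then 0
     else (1 - a) / 2 * log2 (1 + (P2 / (1 - a)) / (1 + h31 ^ 2 * P3))).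

Definition tdmaB (h12 h22 h31 P1 P2 P3 a : R) : R :=
  (if Req_EM_T a 0 then 0
   else a / 2 * log2 (1 + P3 / (1 + h12 ^ 2 * P1 / a)))
  + (if Req_EM_T (1 - a) 0 then 0
     else (1 - a) / 2 * log2 (1 + P3 / (1 + h22 ^ 2 * P2 / (1 - a)))).

(* TDMA-TIN sum-rate: the max over alpha in [0,1] of A + B, taken as the
   supremum (in Rbar) of the set of achieved values. *)
Definition R_TDMA_TIN (h12 h22 h31 P1 P2 P3 : R) : Rbar :=
  Lub_Rbar (fun y => exists a, 0 <= a <= 1 /\
     y = tdmaA h12 h22 h31 P1 P2 P3 a + tdmaB h12 h22 h31 P1 P2 P3 a).

(* Main.v *)
Require Import Defs.
From Stdlib Require Import Reals Lra Psatz.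
From Coquelicot Require Import Coquelicot.
Open Scope R_scope.
Definition FF (P t : R) := ln (1+t+P) - ln (1+t).
Definition dF (P t : R) := /(1+t+P) - /(1+t).

Lemma FF_der P c : 0 < P -> 0 <= c -> derivable_pt_lim (FF P) c (dF P c).
Proof. intros HP Hc. apply is_derive_Reals. unfold FF, dF.
  auto_derive. repeat split; lra. field. lra. Qed.

Lemma dF_eq P t : 0 < P -> 0 <= t -> dF P t = - (P / ((1+t)*(1+t+P))).
Proof. intros. unfold dF. field. lra. Qed.

Lemma dF_lt P s t : 0 < P -> 0 <= s -> s < t -> dF P s < dF P t.
Proof. intros HP Hs Hst. rewrite !dF_eq by lra.
  apply Ropp_lt_contravar. unfold Rdiv. apply Rmult_lt_compat_l; [lra|].
  apply Rinv_lt_contravar. apply Rmult_lt_0_compat; nra. nra. Qed.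

Lemma conv P x y a : 0 < P -> 0 <= x -> x < y -> 0 < a < 1 ->
  a * FF P x + (1-a) * FF P y > FF P (a*x+(1-a)*y).
Proof. intros HP Hx Hxy Ha. set (z := a*x+(1-a)*y).
  assert (x < z) by (unfold z; nra). assert (z < y) by (unfold z; nra).
  destruct (MVT_cor2 (FF P) (dF P) x z) as [c1 [E1 H1]]; auto.
  { intros c Hc. apply FF_der; lra. }
  destruct (MVT_cor2 (FF P) (dF P) z y) as [c2 [E2 H2]]; auto.
  { intros c Hc. apply FF_der; lra. }
  assert (dF P c1 < dF P c2) by (apply dF_lt; lra).
  assert (z - x = (1-a)*(y-x)) by (unfold z; ring).
  assert (y - z = a*(y-x)) by (unfold z; ring).
  rewrite H4 in E1. rewrite H5 in E2.
  assert (0 < a*(1-a)*(y-x)) by (apply Rmult_lt_0_compat; nra).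
  nra. Qed.

Lemma conv_ge P x y a : 0 < P -> 0 <= x -> 0 <= y -> 0 < a < 1 ->
  a * FF P x + (1-a) * FF P y >= FF P (a*x+(1-a)*y) /\
  (x <> y -> a * FF P x + (1-a) * FF P y > FF P (a*x+(1-a)*y)).
Proof. intros HP Hx Hy Ha.
  destruct (Rtotal_order x y) as [H|[H|H]].
  - pose proof (conv P x y a HP Hx H Ha). split; [lra|intros; lra].
  - subst. replace (a*y+(1-a)*y) with y by ring. split; [lra|intros Hn; exfalso; apply Hn; reflexivity].
  - pose proof (conv P y x (1-a) HP Hy H ltac:(lra)).
    replace (1-(1-a)) with a in H0 by ring.
    replace ((1-a)*y+a*x) with (a*x+(1-a)*y) in H0 by ring. split; [lra|intros; lra].
Qed.

Lemma log2_G P t : 0 < P -> 0 <= t -> log2 (1 + P/(1+t)) = FF P t / ln 2.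
Proof. intros. unfold log2, FF. f_equal.
  replace (1 + P/(1+t)) with ((1+t+P)/(1+t)) by (field; lra).
  rewrite ln_div; lra. Qed.

Theorem mainTheorem1 (h12 h22 h31 P1 P2 P3 : R)
  (hP1 : 0 < P1) (hP2 : 0 < P2) (hP3 : 0 < P3) :
  let astar := P1 / (P1 + P2) in
  Rbar_le (Finite (R_SD_TIN h12 h22 h31 P1 P2 P3)) (R_TDMA_TIN h12 h22 h31 P1 P2 P3)
  /\ tdmaA h12 h22 h31 P1 P2 P3 astar + tdmaB h12 h22 h31 P1 P2 P3 astar
       >= R_SD_TIN h12 h22 h31 P1 P2 P3
  /\ (h12 ^ 2 <> h22 ^ 2 ->
       tdmaA h12 h22 h31 P1 P2 P3 astar + tdmaB h12 h22 h31 P1 P2 P3 astar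
         > R_SD_TIN h12 h22 h31 P1 P2 P3
       /\ Rbar_lt (Finite (R_SD_TIN h12 h22 h31 P1 P2 P3))
                  (R_TDMA_TIN h12 h22 h31 P1 P2 P3)).
Proof.
  intros astar.
  set (S := P1 + P2). set (a := h12^2). set (b := h22^2).
  assert (Ha0 : 0 <= a) by (unfold a; nra). assert (Hb0 : 0 <= b) by (unfold b; nra).
  assert (HS : 0 < S) by (unfold S; lra).
  assert (Hal : 0 < astar < 1). { unfold astar; fold S. split.
    apply Rdiv_lt_0_compat; lra. apply Rmult_lt_reg_r with S; auto.
    field_simplify; unfold S; lra. }
  assert (E1 : 1 - astar = P2 / S) by (unfold astar, S; field; lra).
  assert (Hl2 : 0 < ln 2) by (rewrite <- ln_1; apply ln_increasing; lra).
  assert (HN : 0 < 1 + h31^2*P3) by nra.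
  assert (Hval : tdmaA h12 h22 h31 P1 P2 P3 astar + tdmaB h12 h22 h31 P1 P2 P3 astar
     = / 2 * log2 (1 + S / (1 + h31 ^ 2 * P3))
       + / 2 * ((astar * FF P3 (a*S) + (1-astar) * FF P3 (b*S)) / ln 2)).
  { unfold tdmaA, tdmaB.
    destruct (Req_EM_T astar 0); [lra|]. destruct (Req_EM_T (1-astar) 0); [lra|].
    replace (P1/astar) with S by (unfold astar, S; field; lra).
    replace (P2/(1-astar)) with S by (rewrite E1; field; lra).
    replace (h12^2*P1/astar) with (a*S) by (unfold astar, a, S; field; lra).
    replace (h22^2*P2/(1-astar)) with (b*S) by (rewrite E1; unfold b; field; lra).
    rewrite !log2_G by nra. field. lra. }
  assert (Hsd : R_SD_TIN h12 h22 h31 P1 P2 P3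
     = / 2 * log2 (1 + S / (1 + h31 ^ 2 * P3))
       + / 2 * (FF P3 (astar*(a*S) + (1-astar)*(b*S)) / ln 2)).
  { unfold R_SD_TIN. fold S.
    replace (1 + h12^2*P1 + h22^2*P2) with (1 + (astar*(a*S) + (1-astar)*(b*S))).
    rewrite (log2_G P3 (astar*(a*S) + (1-astar)*(b*S))); [reflexivity|lra|apply Rplus_le_le_0_compat; apply Rmult_le_pos; nra].
    rewrite E1. unfold astar, a, b, S. field. lra. }
  destruct (conv_ge P3 (a*S) (b*S) astar hP3 ltac:(nra) ltac:(nra) Hal) as [G1 G2].
  assert (Hge : tdmaA h12 h22 h31 P1 P2 P3 astar + tdmaB h12 h22 h31 P1 P2 P3 astar
       >= R_SD_TIN h12 h22 h31 P1 P2 P3).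
  { rewrite Hval, Hsd. apply Rle_ge. apply Rplus_le_compat_l.
    apply Rmult_le_compat_l; [lra|]. unfold Rdiv.
    apply Rmult_le_compat_r; [left; apply Rinv_0_lt_compat; lra| lra]. }
  assert (Hub : Rbar_le (Finite (tdmaA h12 h22 h31 P1 P2 P3 astar + tdmaB h12 h22 h31 P1 P2 P3 astar))
                 (R_TDMA_TIN h12 h22 h31 P1 P2 P3)).
  { unfold R_TDMA_TIN. destruct (Lub_Rbar_correct (fun y => exists a0, 0 <= a0 <= 1 /\
     y = tdmaA h12 h22 h31 P1 P2 P3 a0 + tdmaB h12 h22 h31 P1 P2 P3 a0)) as [Hu _].
    apply Hu. exists astar. split; [lra|reflexivity]. }
  split; [|split].
  - eapply Rbar_le_trans; [|exact Hub]. simpl. lra.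
  - exact Hge.
  - intros Hab.
    assert (Hgt : tdmaA h12 h22 h31 P1 P2 P3 astar + tdmaB h12 h22 h31 P1 P2 P3 astar
         > R_SD_TIN h12 h22 h31 P1 P2 P3).
    { rewrite Hval, Hsd. apply Rplus_lt_compat_l.
      apply Rmult_lt_compat_l; [lra|]. unfold Rdiv.
      apply Rmult_lt_compat_r; [apply Rinv_0_lt_compat; lra|].
      apply G2. intro He. apply Hab. fold a b.
      apply Rmult_eq_reg_r with S; lra. }
    split; [exact Hgt|].
    eapply Rbar_lt_le_trans; [|exact Hub]. simpl. lra.
Qed.
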